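(* Let $\mu$ be a positive finite Borel measure on $\mathbb{R}^d$ and $0\le\alpha\le d$, and assume $$\liminf_{r\to\infty}\frac{1}{r^{d-\alpha}}\int_{|t|<r}|\widehat{\mu}(t)|^2\,dt>0.$$ Let $\Lambda\subset\mathbb{R}^d$ be countable and suppose $E(\Lambda)$ is a Bessel system in $L^2(\mu)$. Then there is a constant $C$ such that $$\sup_{x\in\mathbb{R}^d}\#\big(\Lambda\cap B(x,r)\big)\le C r^\alpha\quad\text{for all } r\ge 1.$$
   Context: $\widehat{\mu}(t)=\int_{\mathbb{R}^d}e^{-2\pi i\langle t,x\rangle}d\mu(x)$. For $\lambda\in\mathbb{R}^d$, $e_\lambda(x)=e^{2\pi i\langle\lambda,x\rangle}$ and $E(\Lambda)=\{e_\lambda\}_{\lambda\in\Lambda}$. A system $\{f_n\}$ in a Hilbert space $H$ is a Bessel system if there is $C>0$ with $\sum_n|\langle f,f_n\rangle|^2\le C\|f\|^2$ for all $f\in H$. $B(x,r)$ is the open ball of radius $r$ centered at $x$. *)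

(* Defs.v *)
From HB Require Import structures.
From mathcomp Require Import all_boot all_order all_algebra.
From mathcomp Require Import all_classical all_reals all_analysis.
Set Implicit Arguments. Unset Strict Implicit. Unset Printing Implicit Defensive.
Import Order.TTheory GRing.Theory Num.Theory.
Import numFieldNormedType.Exports.
Local Open Scope classical_set_scope.
Local Open Scope ring_scope.

Section Defs.
Context (R : realType).

(* R^d with its Borel sigma-algebra (generated by the open sets of the
   product = Euclidean topology on row vectors). *)
Definition Rd (d : nat) := g_sigma_algebraType (@open ('rV[R]_d)).

Definition dotp d (t x : 'rV[R]_d) : R := \sum_(i < d) t ord0 i * x ord0 i.
Definition enorm d (x : 'rV[R]_d) : R := Num.sqrt (dotp x x).
Definition eball d (x : 'rV[R]_d) (r : R) : set 'rV[R]_d :=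
  [set y | enorm (y - x) < r].

Definition phase d (t x : 'rV[R]_d) : R := 2 * pi * dotp t x.

(* Fourier transform of mu:  mu^(t) = int e^{-2 pi i <t,x>} dmu(x)
   = ft_re mu t + i * ft_im mu t. *)
Definition ft_re d (mu : {measure set (Rd d) -> \bar R}) (t : 'rV[R]_d) : R :=
  fine (\int[mu]_(x in setT) (cos (phase t x))%:E)%E.
Definition ft_im d (mu : {measure set (Rd d) -> \bar R}) (t : 'rV[R]_d) : R :=
  - fine (\int[mu]_(x in setT) (sin (phase t x))%:E)%E.
Definition ft_abs2 d (mu : {measure set (Rd d) -> \bar R}) (t : 'rV[R]_d) : R :=
  ft_re mu t ^+ 2 + ft_im mu t ^+ 2.

(* Lebesgue integral on R^d of a nonnegative function, computed as the
   iterated one-dimensional Lebesgue integral (Tonelli). *)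
Fixpoint leb_int (d : nat) : ('rV[R]_d -> \bar R) -> \bar R :=
  match d with
  | 0 => fun f => f 0
  | n.+1 => fun f =>
      (\int[@lebesgue_measure R]_(s in setT)
         leb_int (fun y : 'rV[R]_n => f (row_mx (\row_(_ < 1) s) y)))%E
  end.

(* A complex function f = u + i v on R^d belongs to L^2(mu). *)
Definition L2c d (mu : {measure set (Rd d) -> \bar R}) (u v : Rd d -> R) :=
  [/\ measurable_fun setT u, measurable_fun setT v &
      (\int[mu]_(x in setT) (u x ^+ 2 + v x ^+ 2)%:E < +oo)%E].

Definition L2norm2 d (mu : {measure set (Rd d) -> \bar R}) (u v : Rd d -> R)
  : \bar R := (\int[mu]_(x in setT) (u x ^+ 2 + v x ^+ 2)%:E)%E.

(* <f, e_l> = int (u + i v) e^{-2 pi i <l,x>} dmu = coef_re + i coef_im *)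
Definition coef_re d (mu : {measure set (Rd d) -> \bar R}) (u v : Rd d -> R)
  (l : 'rV[R]_d) : R :=
  fine (\int[mu]_(x in setT)
          (u x * cos (phase l x) + v x * sin (phase l x))%:E)%E.
Definition coef_im d (mu : {measure set (Rd d) -> \bar R}) (u v : Rd d -> R)
  (l : 'rV[R]_d) : R :=
  fine (\int[mu]_(x in setT)
          (v x * cos (phase l x) - u x * sin (phase l x))%:E)%E.
Definition coef_abs2 d (mu : {measure set (Rd d) -> \bar R}) (u v : Rd d -> R)
  (l : 'rV[R]_d) : R := coef_re mu u v l ^+ 2 + coef_im mu u v l ^+ 2.

Definition Bessel d (mu : {measure set (Rd d) -> \bar R}) (Lam : set 'rV[R]_d) :=
  exists C : R, 0 < C /\
    forall u v : Rd d -> R, L2c mu u v ->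
      (\esum_(l in Lam) (coef_abs2 mu u v l)%:E <= C%:E * L2norm2 mu u v)%E.

End Defs.

(* Main.v *)
Require Import Defs.
From HB Require Import structures.
From mathcomp Require Import all_boot all_order all_algebra.
From mathcomp Require Import all_classical all_reals all_analysis.
From mathcomp Require Import measurable_realfun.
From mathcomp Require Import ring lra.
Import Order.TTheory GRing.Theory Num.Theory.
Import numFieldNormedType.Exports.
Local Open Scope classical_set_scope.
Local Open Scope ring_scope.

Section sup_add.
Context (R : realType).
Local Open Scope ereal_scope.

Lemma sup_add_aux (a : \bar R) (B : set (\bar R)) (c : \bar R) :
  0 <= a -> (forall b, B b -> 0 <= b) -> B !=set0 ->
  (forall b, B b -> a + b <= c) -> a + ereal_sup B <= c.
Proof.
move=> a0 B0 [b Bb] H.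
have [ae|ay] := eqVneq a +oo.
  rewrite ae in H *.
  have := H b Bb; rewrite (@addye _ b); last first.
    by apply/negP => /eqP bn; have := B0 b Bb; rewrite bn.
  by rewrite leye_eq => /eqP ->; rewrite leey.
have af : a \is a fin_num.
  by rewrite fin_numE ay andbT; apply/negP => /eqP an; move: a0; rewrite an.
rewrite -leeBrDl //; apply: ge_ereal_sup => x Bx.
by rewrite leeBrDl //; apply: H.
Qed.

Lemma sup_add_le (A B : set (\bar R)) (c : \bar R) :
  (forall a, A a -> 0 <= a) -> A !=set0 ->
  (forall b, B b -> 0 <= b) -> B !=set0 ->
  (forall a b, A a -> B b -> a + b <= c) ->
  ereal_sup A + ereal_sup B <= c.
Proof.
move=> A0 An B0 Bn H; rewrite addeC; apply: sup_add_aux => //.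
- case: Bn => b Bb; apply: le_ereal_sup_tmp; exists b => //; exact: B0.
- move=> a Aa; rewrite addeC; apply: sup_add_aux => //; first exact: A0.
  by move=> b Bb; apply: H.
Qed.

End sup_add.

Section nnI.
Context (R : realType).
Local Open Scope ereal_scope.
Local Notation T := (measurableTypeR R).
Local Notation L := (@lebesgue_measure R).
Import HBNNSimple.

Definition nnI (f : T -> \bar R) := ereal_sup [set sintegral L h |
  h in [set h : {nnsfun T >-> R} | forall x, (h x)%:E <= f x]].

Lemma intE (f : T -> \bar R) :
  \int[L]_(x in setT) f x = nnI (f^\+) - nnI (f^\-).
Proof.
rewrite integralE !ge0_integralTE // => x; first [exact: funepos_ge0|exact: funeneg_ge0].
Qed.

Lemma int_nnI (f : T -> \bar R) : (forall x, 0 <= f x) ->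
  \int[L]_(x in setT) f x = nnI f.
Proof. by move=> f0; rewrite ge0_integralTE. Qed.

Lemma nnI_mono (f g : T -> \bar R) : (forall x, f x <= g x) -> nnI f <= nnI g.
Proof.
move=> fg; apply: ereal_sup_le => _ [h /= hf <-]; exists h => //= x.
exact: le_trans (hf x) (fg x).
Qed.

Lemma nnI_ge0 (f : T -> \bar R) : (forall x, 0 <= f x) -> 0 <= nnI f.
Proof.
move=> f0; apply: le_ereal_sup_tmp; exists (sintegral L (@nnsfun0 _ T R)).
  by exists nnsfun0.
by rewrite sintegral0.
Qed.

Lemma int_ge0' (f : T -> \bar R) : (forall x, 0 <= f x) ->
  0 <= \int[L]_(x in setT) f x.
Proof. by move=> f0; rewrite int_nnI //; exact: nnI_ge0. Qed.

Lemma int_mono (f g : T -> \bar R) : (forall x, 0 <= f x) ->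
  (forall x, f x <= g x) ->
  \int[L]_(x in setT) f x <= \int[L]_(x in setT) g x.
Proof.
move=> f0 fg; rewrite !int_nnI //; first exact: nnI_mono.
by move=> x; apply: le_trans (f0 x) (fg x).
Qed.

Lemma int_superadd (f g : T -> \bar R) : (forall x, 0 <= f x) ->
  (forall x, 0 <= g x) ->
  \int[L]_(x in setT) f x + \int[L]_(x in setT) g x <=
  \int[L]_(x in setT) (f x + g x).
Proof.
move=> f0 g0; rewrite !int_nnI //; last by move=> x; rewrite adde_ge0.
apply: sup_add_le.
- by move=> _ [h _ <-]; exact: sintegral_ge0.
- by exists (sintegral L (@nnsfun0 _ T R)); exists nnsfun0.
- by move=> _ [h _ <-]; exact: sintegral_ge0.
- by exists (sintegral L (@nnsfun0 _ T R)); exists nnsfun0.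
move=> _ _ [h1 /= h1f <-] [h2 /= h2g <-].
rewrite -sintegralD //; apply: le_ereal_sup_tmp.
exists (sintegral L (add_nnsfun h1 h2)) => //.
exists (add_nnsfun h1 h2) => //= x.
by rewrite EFinD; apply: leeD.
Qed.

End nnI.
Arguments nnI {R}.

Section shift.
Context (R : realType) (a : R).
Local Notation T := (measurableTypeR R).
Local Notation L := (@lebesgue_measure R).

Lemma mshift : measurable_fun [set: T] (fun x : T => ((x + a)%R : T)).
Proof.
have : measurable_fun (setT : set R) (fun x : R => x + a).
  by apply: measurable_funD => //; exact: measurable_cst.
exact.
Qed.

Definition shL : set T -> \bar R :=
  fun A => L ((fun x : T => ((x + a)%R : T)) @^-1` A).

Let shL0 : shL set0 = 0%E.
Proof. by rewrite /shL preimage_set0 measure0. Qed.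

Let shL_ge0 A : (0 <= shL A)%E.
Proof. exact: measure_ge0. Qed.

Let shL_sigma_additive : semi_sigma_additive shL.
Proof.
move=> F mF tF mUF; rewrite /shL preimage_bigcup.
apply: measure_semi_sigma_additive.
- by move=> n; rewrite -[X in measurable X]setTI; exact: mshift.
- apply/trivIsetP => /= i j _ _ ij; rewrite -preimage_setI.
  by move/trivIsetP : tF => /(_ _ _ _ _ ij) ->//; rewrite preimage_set0.
- by rewrite -preimage_bigcup -[X in measurable X]setTI; exact: mshift.
Qed.

HB.instance Definition _ := isMeasure.Build _ _ _ shL shL0 shL_ge0 shL_sigma_additive.

Lemma lebesgue_shift (A : set T) : measurable A ->
  L ((fun x : T => ((x + a)%R : T)) @^-1` A) = L A.
Proof.
move=> mA; apply/esym; rewrite -/(shL A).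
apply: (@lebesgue_measure_unique R shL) => // X [[b c] _ <-].
rewrite /shL /=.
transitivity (L `](b - a), (c - a)]%classic); last first.
  congr (L _); apply/seteqP; split => x /=; rewrite !in_itv /=.
    by rewrite ltrBlDr lerBrDr.
  by rewrite ltrBlDr lerBrDr.
rewrite !lebesgue_measure_itv /= !lte_fin ltrD2r.
by case: ifP => // _; rewrite -!EFinB opprB addrC addrA subrK addrC.
Qed.
End shift.

Section shift_sfun.
Context (R : realType) (a : R).
Local Notation T := (measurableTypeR R).
Local Notation L := (@lebesgue_measure R).
Import HBNNSimple.
Variable h : {nnsfun T >-> R}.

Definition hsh : T -> R := fun x => h (x + a).

Let hsh_m : measurable_fun [set: T] hsh.
Proof. exact (@measurableT_comp _ _ _ T T R h setT (fun x : T => ((x + a)%R : T)) (measurable_funPT h) (@mshift R a)). Qed.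
HB.instance Definition _ := isMeasurableFun.Build _ _ T R hsh hsh_m.

Let hsh_fin : finite_set (range hsh).
Proof.
apply: (@sub_finite_set _ _ (range h)) => // _ [x _ <-]; by exists (x + a).
Qed.
HB.instance Definition _ := FiniteImage.Build T R hsh hsh_fin.

Let hsh_ge0 : forall x, 0 <= hsh x.
Proof. by move=> x; rewrite /hsh. Qed.
HB.instance Definition _ := isNonNegFun.Build T R hsh hsh_ge0.

Definition hsh_nnsfun : {nnsfun T >-> R} := hsh.

Lemma sintegral_hsh : sintegral L hsh_nnsfun = sintegral L h.
Proof.
rewrite !sintegralE.
have -> : range hsh_nnsfun = range h.
  apply/seteqP; split => _ [x _ <-].
    by exists (x + a).
  by exists (x - a) => //; rewrite /= /hsh subrK.
apply: eq_fsbigr => x _; congr (_ * _)%E.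
have -> : hsh_nnsfun @^-1` [set x] = (fun y : T => (y + a : T)) @^-1` (h @^-1` [set x]) by [].
apply: lebesgue_shift.
by rewrite -[X in measurable X]setTI; apply: measurable_funPT.
Qed.

End shift_sfun.

Section nnI_shift.
Context (R : realType).
Local Notation T := (measurableTypeR R).
Local Notation L := (@lebesgue_measure R).
Import HBNNSimple.

Lemma nnI_shift_le (g : T -> \bar R) (a : R) :
  (nnI g <= nnI (fun x : T => g ((x + a)%R : T)))%E.
Proof.
apply: ge_ereal_sup => _ [h /= hg <-].
apply: le_ereal_sup_tmp; exists (sintegral L (@hsh_nnsfun R a h)).
  by exists (@hsh_nnsfun R a h) => // x; apply: hg.
by rewrite sintegral_hsh.
Qed.

Lemma nnI_shift (g : T -> \bar R) (a : R) :
  nnI (fun x : T => g ((x + a)%R : T)) = nnI g.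
Proof.
apply/eqP; rewrite eq_le nnI_shift_le andbT.
have := nnI_shift_le (fun x : T => g ((x + a)%R : T)) (- a).
move=> H; apply: (le_trans H); rewrite le_eqVlt; apply/orP; left; apply/eqP.
by congr nnI; apply: funext => x /=; rewrite subrK.
Qed.

Lemma int_shift (g : T -> \bar R) (a : R) :
  (\int[L]_(x in setT) g ((x + a)%R : T) = \int[L]_(x in setT) g x :> \bar R)%E.
Proof.
rewrite !intE.
rewrite -(nnI_shift (g^\+)%E a) -(nnI_shift (g^\-)%E a).
by congr (nnI _ - nnI _)%E; apply: funext => x; rewrite ?funeposE ?funenegE.
Qed.

End nnI_shift.

Section leb.
Context (R : realType).
Local Notation L := (@lebesgue_measure R).
Local Open Scope ereal_scope.

Lemma leb_intS n (f : 'rV[R]_n.+1 -> \bar R) :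
  leb_int f = \int[L]_(s in setT)
     leb_int (fun y : 'rV[R]_n => f (row_mx (\row_(_ < 1) (s : R)) y)).
Proof. by []. Qed.

Lemma leb_ge0 n (f : 'rV[R]_n -> \bar R) : (forall t, 0 <= f t) ->
  0 <= leb_int f.
Proof.
elim: n f => [|n IH] f f0 /=; first exact: f0.
by apply: int_ge0' => s; apply: IH.
Qed.

Lemma leb_mono n (f g : 'rV[R]_n -> \bar R) : (forall t, 0 <= f t) ->
  (forall t, f t <= g t) -> leb_int f <= leb_int g.
Proof.
elim: n f g => [|n IH] f g f0 fg /=; first exact: fg.
apply: int_mono => s; first by apply: leb_ge0.
by apply: IH.
Qed.

Lemma leb_superadd n (f g : 'rV[R]_n -> \bar R) : (forall t, 0 <= f t) ->
  (forall t, 0 <= g t) -> leb_int f + leb_int g <= leb_int (fun t => f t + g t).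
Proof.
elim: n f g => [|n IH] f g f0 g0 /=; first by [].
apply: le_trans; first by apply: int_superadd => s; apply: leb_ge0.
apply: int_mono => s.
  by apply: adde_ge0; apply: leb_ge0.
by apply: IH.
Qed.

Lemma leb_sum n (I : Type) (F : seq I) (f : I -> 'rV[R]_n -> \bar R) :
  (forall i t, 0 <= f i t) ->
  \sum_(i <- F) leb_int (f i) <= leb_int (fun t => \sum_(i <- F) f i t).
Proof.
move=> f0; elim: F => [|i F IH].
  rewrite big_nil; apply: leb_ge0 => t; by rewrite big_nil.
rewrite big_cons.
apply: le_trans; first exact: (leeD2l _ IH).
apply: le_trans; first apply: leb_superadd => //.
  by move=> t; apply: sume_ge0.
by apply: leb_mono => t; [apply: adde_ge0 => //; apply: sume_ge0|rewrite big_cons].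
Qed.


Lemma row1_add (s c : R) :
  ((\row_(_ < 1) s) + (\row_(_ < 1) c) = \row_(_ < 1) (s + c) :> 'rV[R]_1)%R.
Proof. by apply/matrixP => i j; rewrite !mxE. Qed.

Lemma row_mx_split n (a : 'rV[R]_n.+1) :
  row_mx (\row_(_ < 1) a ord0 ord0) (rsubmx (a : 'rV[R]_(1 + n))) = a.
Proof.
apply/matrixP => i j; rewrite (ord1 i).
rewrite -(splitK j); case: (fintype.split j) => k /=.
  by rewrite row_mxEl mxE (ord1 k); congr (a _ _); apply: val_inj.
have := row_mxEr (\row_(_ < 1) a ord0 ord0) (rsubmx (a : 'rV[R]_(1 + n))) ord0 k.
by move=> ->; rewrite mxE.
Qed.

Lemma leb_shift n (f : 'rV[R]_n -> \bar R) (a : 'rV[R]_n) :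
  leb_int (fun t => f (t + a)%R) = leb_int f.
Proof.
elim: n f a => [|n IH] f a /=.
  by rewrite (_ : (0 + a)%R = 0%R) // ; apply/matrixP => i [].
rewrite -[in RHS](@int_shift R _ (a ord0 ord0)).
apply: eq_integral => s _.
rewrite -[in RHS](IH _ (rsubmx (a : 'rV[R]_(1 + n)))).
congr leb_int; apply: funext => y; congr f.
rewrite -{1}(@row_mx_split n a).
by rewrite (add_row_mx (\row_(_ < 1) (s : R)) y) row1_add.
Qed.


Lemma int_cst_ball (c K rho : R) : (0 <= rho)%R -> (0 <= K)%R ->
  \int[L]_(s in setT) (K * \1_(ball c rho) (s : R))%:E = (K * (rho *+ 2))%:E.
Proof.
move=> r0 K0.
rewrite (@integralZl_indic _ _ _ L setT measurableT (fun _ => ball c rho) K) //.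
- rewrite integral_indic //; last exact: measurable_ball.
  rewrite setIT; have Hb := lebesgue_measure_ball c r0.
  transitivity (K%:E * (rho *+ 2)%:E); first by congr (_ * _); exact: Hb.
  by [].
- by move=> K0'; move: (lt_le_trans K0' K0); rewrite ltxx.
- exact: measurable_ball.
Qed.

Lemma leb_box n (z : 'rV[R]_n) (rho K : R) : (0 <= rho)%R -> (0 <= K)%R ->
  leb_int (fun y : 'rV[R]_n =>
    (K * \prod_(i < n) \1_(ball (z ord0 i) rho) (y ord0 i))%:E) =
  (K * (rho *+ 2) ^+ n)%:E.
Proof.
elim: n z K => [|n IH] z K r0 K0 /=.
  by rewrite big_ord0 expr0.
transitivity (\int[L]_(s in setT)
   ((K * \1_(ball (z ord0 ord0) rho) (s : R)) * (rho *+ 2) ^+ n)%:E).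
  apply: eq_integral => s _.
  rewrite -(IH (rsubmx (z : 'rV[R]_(1 + n)))) //; last by rewrite mulr_ge0.
  congr leb_int; apply: funext => y; congr EFin.
  rewrite big_ord_recl -mulrA; congr (_ * _)%R.
  congr (_ * _)%R.
    have -> : (ord0 : 'I_n.+1) = lshift n (ord0 : 'I_1) by apply: val_inj.
    by rewrite (row_mxEl (\row_(_ < 1) (s : R)) y) mxE.
  apply: eq_bigr => i _.
  have -> : lift ord0 i = rshift 1 i by apply: val_inj.
  by rewrite (row_mxEr (\row_(_ < 1) (s : R)) y) mxE.
under eq_integral do rewrite mulrAC.
have Kp : (0 <= K * (rho *+ 2) ^+ n)%R by rewrite mulr_ge0 // exprn_ge0 // mulrn_wge0.
have H := @int_cst_ball (z ord0 ord0) _ _ r0 Kp.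
apply: (eq_trans H).
by rewrite exprS [((rho *+ 2) * _)%R]mulrC mulrA.
Qed.

End leb.

Section fourier.
Context (R : realType).

Lemma coord_meas d (i : 'I_d) :
  measurable_fun (setT : set (Rd R d)) (fun x : Rd R d => (x : 'rV[R]_d) ord0 i).
Proof.
apply: (@measurability _ _ _ _ _ _ (R.-ocitv.-measurable)) => //.
move=> _ [_ [[a b] _ <-] <-].
rewrite setTI.
have -> : (fun x : Rd R d => (x : 'rV[R]_d) ord0 i) @^-1` `]a, b]%classic =
   ((fun x : 'rV[R]_d => x ord0 i) @^-1` [set x | a < x]) `\`
   ((fun x : 'rV[R]_d => x ord0 i) @^-1` [set x | b < x]).
  apply/seteqP; split => x /=; rewrite in_itv /=.
    by move=> /andP[-> xb]; split => //; apply/negP; rewrite -leNgt.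
  by move=> [-> /negP]; rewrite -leNgt.
apply: measurableD; apply: sub_sigma_algebra; apply: open_comp.
- by move=> x _; exact: coord_continuous.
- exact (@open_gt R a).
- by move=> x _; exact: coord_continuous.
- exact (@open_gt R b).
Qed.


Lemma dotp_meas d (y : 'rV[R]_d) :
  measurable_fun (setT : set (Rd R d)) (fun x : Rd R d => dotp y x).
Proof.
rewrite /dotp; apply: measurable_sum => i.
apply: measurable_funM; first exact: measurable_cst.
exact: coord_meas.
Qed.

Lemma phase_meas d (y : 'rV[R]_d) :
  measurable_fun (setT : set (Rd R d)) (fun x : Rd R d => phase y x).
Proof.
rewrite /phase; apply: measurable_funM; first exact: measurable_cst.
exact: dotp_meas.
Qed.

Lemma cos_phase_meas d (y : 'rV[R]_d) :
  measurable_fun (setT : set (Rd R d)) (fun x : Rd R d => cos (phase y x)).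
Proof.
exact (measurableT_comp (continuous_measurable_fun (@continuous_cos R)) (@phase_meas d y)).
Qed.

Lemma sin_phase_meas d (y : 'rV[R]_d) :
  measurable_fun (setT : set (Rd R d)) (fun x : Rd R d => sin (phase y x)).
Proof.
exact (measurableT_comp (continuous_measurable_fun (@continuous_sin R)) (@phase_meas d y)).
Qed.

Lemma phaseB d (y l x : 'rV[R]_d) : phase (y - l) x = phase y x - phase l x.
Proof.
rewrite /phase /dotp -mulrBr; congr (_ * _).
rewrite -sumrB; apply: eq_bigr => i _; by rewrite !mxE mulrBl.
Qed.


Section bessel.
Variables (d : nat) (mu : {finite_measure set (Rd R d) -> \bar R}).
Local Open Scope ereal_scope.

Let u (y : 'rV[R]_d) := fun x : Rd R d => cos (phase y x).
Let v (y : 'rV[R]_d) := fun x : Rd R d => sin (phase y x).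

Lemma int_one : \int[mu]_(x in setT) (1%R)%:E = mu setT.
Proof.
by rewrite (_ : (fun _ => (1%R)%:E) = cst (1%R)%:E) // integral_cst // mul1e.
Qed.

Lemma muT_fin : mu setT \is a fin_num.
Proof. exact: fin_num_measure. Qed.

Lemma L2c_uv y : L2c mu (u y) (v y).
Proof.
split; [exact: cos_phase_meas|exact: sin_phase_meas|].
under eq_integral do rewrite cos2Dsin2.
by rewrite int_one ltey_eq muT_fin.
Qed.

Lemma L2norm2_uv y : L2norm2 mu (u y) (v y) = mu setT.
Proof.
by rewrite /L2norm2; under eq_integral do rewrite cos2Dsin2; rewrite int_one.
Qed.

Lemma coef_uv y l : coef_abs2 mu (u y) (v y) l = ft_abs2 mu (y - l).
Proof.
rewrite /coef_abs2 /ft_abs2 /coef_re /coef_im /ft_re /ft_im sqrrN.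
congr (_ ^+ 2 + _ ^+ 2)%R; congr fine; apply: eq_integral => x _; congr EFin;
  rewrite /u /v phaseB.
  by rewrite cosD cosN sinN mulrN opprK.
by rewrite sinD cosN sinN mulrN.
Qed.

Lemma bessel_sum (Lam : set 'rV[R]_d) (C : R) :
  (forall u v, L2c mu u v ->
     \esum_(l in Lam) (coef_abs2 mu u v l)%:E <= C%:E * L2norm2 mu u v) ->
  forall (y : 'rV[R]_d) (F : seq 'rV[R]_d), uniq F -> (forall l, l \in F -> Lam l) ->
  \sum_(l <- F) (ft_abs2 mu (y - l))%:E <= C%:E * mu setT.
Proof.
move=> HB y F uF FL.
have := HB _ _ (L2c_uv y); rewrite L2norm2_uv; apply: le_trans.
apply: esum_ge; exists [set` F].
  by split; [exact: finite_seq|move=> l /= lF; apply: FL].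
rewrite -fsbig_seq //; apply: lee_sum => l _.
by rewrite coef_uv.
Qed.

End bessel.

End fourier.

Section norm.
Context (R : realType).

Lemma dotp_ge0 d (z : 'rV[R]_d) : 0 <= dotp z z.
Proof. by rewrite /dotp sumr_ge0 // => i _; rewrite -expr2 sqr_ge0. Qed.

Lemma enorm_lt d (z : 'rV[R]_d) r : 0 < r -> (enorm z < r) = (dotp z z < r ^+ 2).
Proof.
move=> r0; rewrite /enorm -[RHS]ltr_sqrt ?exprn_gt0 // sqrtr_sqr.
by rewrite gtr0_norm.
Qed.

Lemma dotp_add_le d (a b : 'rV[R]_d) :
  dotp (a + b) (a + b) <= 2 * dotp a a + 2 * dotp b b.
Proof.
rewrite /dotp !mulr_sumr -big_split /=; apply: ler_sum => i _.
rewrite !mxE.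
set p := a ord0 i; set q := b ord0 i.
rewrite -subr_ge0.
have -> : 2 * (p * p) + 2 * (q * q) - (p + q) * (p + q) = (p - q) ^+ 2 by ring.
exact: sqr_ge0.
Qed.

Lemma enorm_add_lt d (a b : 'rV[R]_d) r :
  0 < r -> enorm a < r -> enorm b < r -> enorm (a + b) < 2 * r.
Proof.
move=> r0; rewrite !enorm_lt ?mulr_gt0 // => ha hb.

apply: le_lt_trans (dotp_add_le _ a b) _.
have -> : (2 * r) ^+ 2 = 2 * r ^+ 2 + 2 * r ^+ 2 by ring.
by rewrite ltrD // ltr_pM2l.
Qed.

Lemma coord_lt d (z : 'rV[R]_d) r i : 0 < r -> enorm z < r -> `|z ord0 i| < r.
Proof.
move=> r0; rewrite enorm_lt // => h.
rewrite -(@ltr_pXn2r _ 2) ?nnegrE ?normr_ge0 ?ltW // real_normK ?num_real //.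
apply: le_lt_trans h; rewrite /dotp (bigD1 i) //= -expr2 lerDl.
by rewrite sumr_ge0 // => j _; rewrite -expr2 sqr_ge0.
Qed.

Lemma eball_box d (x y : 'rV[R]_d) r : 0 < r ->
  \1_(eball x r) y <= \prod_(i < d) \1_(ball (x ord0 i) r) (y ord0 i) :> R.
Proof.
move=> r0; rewrite /indic; have [/set_mem /= hy|_] := boolP (y \in eball x r); last first.
  by apply: prodr_ge0 => i _; rewrite ler0n.
rewrite big1 // => i _; rewrite (_ : y ord0 i \in _ = true) //; apply/mem_set => /=.
rewrite /ball /= -normrN opprB.
by have := @coord_lt _ _ _ i r0 hy; rewrite !mxE.
Qed.

End norm.

Section key.
Context (R : realType) (d : nat) (mu : {finite_measure set (Rd R d) -> \bar R}).
Variables (Lam : set 'rV[R]_d) (C0 : R).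
Hypothesis C0pos : 0 < C0.
Hypothesis HB : forall u v, L2c mu u v ->
     (\esum_(l in Lam) (coef_abs2 mu u v l)%:E <= C0%:E * L2norm2 mu u v)%E.

Definition Ir (r : R) : \bar R :=
  leb_int (fun t : 'rV[R]_d => (\1_(eball 0 r) t * ft_abs2 mu t)%:E).

Lemma ft_abs2_ge0 t : 0 <= ft_abs2 mu t.
Proof. by rewrite /ft_abs2 addr_ge0 // sqr_ge0. Qed.

Lemma indic_ge0' (A : set 'rV[R]_d) t : 0 <= \1_A t :> R.
Proof. by rewrite /indic ler0n. Qed.

Lemma key (rho : R) (x : 'rV[R]_d) (F : seq 'rV[R]_d) : 0 < rho ->
  uniq F -> (forall l, l \in F -> Lam l /\ eball x rho l) ->
  (\sum_(l <- F) Ir rho <=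
   ((C0 * fine (mu setT)) * ((2 * rho) *+ 2) ^+ d)%:E)%E.
Proof.
move=> r0 uF FL.
pose E := eball x (2 * rho).
pose g l (y : 'rV[R]_d) := (\1_E y * ft_abs2 mu (y - l))%:E.
have g0 l y : (0 <= g l y)%E by rewrite lee_fin mulr_ge0 ?indic_ge0' ?ft_abs2_ge0.
apply: (@le_trans _ _ (\sum_(l <- F) leb_int (g l))%E).
  rewrite big_seq [X in (_ <= X)%E]big_seq; apply: lee_sum => l lF.
  rewrite -(@leb_shift R _ (g l) l); apply: leb_mono.
    by move=> t; rewrite lee_fin mulr_ge0 ?indic_ge0' ?ft_abs2_ge0.
  move=> t; rewrite /g addrK lee_fin ler_wpM2r ?ft_abs2_ge0 //.
  rewrite /indic; have [/set_mem /= ht|_] := boolP (t \in eball 0 rho); last by rewrite ler0n.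
  rewrite (_ : (t + l) \in E = true) //; apply/mem_set; rewrite /E /eball /=.
  have [_ lx] := FL l lF; move: lx ht; rewrite /eball /= subr0 => lx ht.
  by rewrite -addrA; apply: enorm_add_lt.
apply: le_trans; first by apply: leb_sum.
rewrite -(@leb_box R d x (2 * rho) (C0 * fine (mu setT))); first last.
- by apply: mulr_ge0; [exact: ltW|apply: fine_ge0; exact: measure_ge0].
- by apply: mulr_ge0 => //; exact: ltW.
apply: leb_mono.
  by move=> t; apply: sume_ge0.
move=> t; rewrite /g sumEFin lee_fin -mulr_sumr.
rewrite [X in _ <= X]mulrC; apply: ler_pM.
- exact: indic_ge0'.
- by apply: sumr_ge0 => l _; apply: ft_abs2_ge0.
- by apply: eball_box; rewrite mulr_gt0.
have := @bessel_sum R d mu Lam C0 HB t F uF (fun l lF => (FL l lF).1).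
by rewrite -(fineK (@muT_fin R d mu)) -EFinM sumEFin lee_fin.
Qed.

End key.

From mathcomp Require Import finmap.

Lemma lim_extract (R : realType) (f : R -> \bar R) :
  (0 < limf_einf f (pinfty_nbhs R))%E ->
  exists M c : R, [/\ 1 <= M, 0 < c & forall r, M <= r -> (c%:E <= f r)%E].
Proof.
rewrite limf_einfE => /ereal_sup_gt [_ [V [M0 [M0r HV]] <-] e0].
have [c [c0 ce]] : exists c : R, 0 < c /\ (c%:E <= ereal_inf (f @` V))%E.
  move: e0; case: (ereal_inf (f @` V)) => [e| |] //=.
  - by move=> e0; exists e; split.
  - by move=> _; exists 1; split => //; rewrite leey.
exists (Num.max (M0 + 1) 1), c; split => //.
  by rewrite le_max lexx orbT.
move=> r; rewrite ge_max => /andP[Mr _].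
apply: (le_trans ce); apply: ereal_inf_lbound; exists r => //.
apply: HV; apply: lt_le_trans Mr; by rewrite ltrDl.
Qed.

Lemma infinite_big (T : choiceType) (S : set T) : ~ finite_set S ->
  forall n, exists s : seq T, [/\ uniq s, size s = n & forall l, l \in s -> S l].
Proof.
move=> inf; elim => [|n [s [us ss sS]]]; first by exists [::].
have [y [Sy ys]] : exists y, S y /\ y \notin s.
  apply: contrapT => H; apply: inf; apply: (sub_finite_set _ (finite_seq s)).
  move=> y Sy /=; apply/negPn/negP => ys; apply: H; by exists y.
exists (y :: s); split => //=; first by rewrite ys.
  by rewrite ss.
by move=> l; rewrite inE => /orP[/eqP ->|/sS].
Qed.

Lemma sum_cst_seq (R : realType) (T : Type) (F : seq T) (a : R) :
  (\sum_(l <- F) a%:E)%E = ((size F)%:R * a)%:E.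
Proof.
elim: F => [|y F IH]; first by rewrite big_nil mul0r.
by rewrite big_cons IH /= -EFinD mulrSr mulrDl mul1r addrC.
Qed.

Local Open Scope classical_set_scope.
Local Open Scope fset_scope.
Local Open Scope ring_scope.

Theorem lemma3p1 (R : realType) (d : nat)
  (mu : {finite_measure set (Rd R d) -> \bar R}) (alpha : R) :
  0 <= alpha <= d%:R ->
  (0 < limf_einf
         (fun r : R => ((r `^ (d%:R - alpha))^-1)%:E *
            leb_int (fun t : 'rV[R]_d => (\1_(eball 0 r) t * ft_abs2 mu t)%:E))
         (pinfty_nbhs R))%E ->
  forall Lam : set 'rV[R]_d, countable Lam -> Bessel mu Lam ->
  exists C : R, forall r : R, 1 <= r -> forall x : 'rV[R]_d,
    finite_set (Lam `&` eball x r) /\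
    (#|` fset_set (Lam `&` eball x r)|%:R <= C * r `^ alpha).
Proof.
move=> /andP[a0 ad] hlim Lam _ [C0 [C0pos HB]].
have [M [c [M1 c0 Hc]]] := @lim_extract R _ hlim.
set K := C0 * fine (mu setT).
set B := K * 4 ^+ d * M `^ alpha / c.
exists B => r r1 x.
set S := (Lam `&` eball x r)%classic.
have bound : forall F : seq 'rV[R]_d, uniq F -> (forall l, l \in F -> S l) ->
    (size F)%:R <= B * r `^ alpha.
  move=> F uF FS.
  set rho := r * M.
  have r0 : 0 < r by apply: lt_le_trans r1.
  have M0 : 0 < M by apply: lt_le_trans M1.
  have rho0 : 0 < rho by rewrite mulr_gt0.
  have hr : r <= rho by rewrite /rho ler_peMr // ltW.
  have hM : M <= rho by rewrite /rho ler_peMl // ltW.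
  have FL : forall l, l \in F -> Lam l /\ eball x rho l.
    move=> l /FS [Ll]; rewrite /eball /= => lr; split => //.
    exact: lt_le_trans lr hr.
  have H1 := @key R d mu Lam C0 C0pos HB rho x F rho0 uF FL.
  have H2 := Hc rho hM; rewrite /= in H2.
  set P := rho `^ (d%:R - alpha).
  have P0 : 0 < P by apply: powR_gt0.
  have H3 : ((c * P)%:E <= @Ir R d mu rho)%E.
    rewrite -(@lee_pmul2l _ (P^-1)%:E) // ?lte_fin ?invr_gt0 //.
    by rewrite -EFinM mulrC -mulrA mulfV ?gt_eqF // mulr1.
  have H4 : ((size F)%:R * (c * P) <= K * ((2 * rho) *+ 2) ^+ d).
    rewrite -lee_fin; apply: le_trans H1.
    rewrite -sum_cst_seq big_seq [X in (_ <= X)%E]big_seq.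
    by apply: lee_sum => l _.
  set Q := rho `^ alpha.
  have HPQ : ((2 * rho) *+ 2) ^+ d = 4 ^+ d * (P * Q).
    rewrite /P /Q -powRD; last by rewrite (gt_eqF rho0) implybT.
    rewrite subrK powR_mulrn ?ltW // -exprMn; congr (_ ^+ _).
    by rewrite -mulr_natl; ring.
  rewrite HPQ in H4.
  have H5 : (size F)%:R * c <= K * 4 ^+ d * Q.
    rewrite -(@ler_pM2r _ P) //.
    have -> : (size F)%:R * c * P = (size F)%:R * (c * P) by ring.
    have -> : K * 4 ^+ d * Q * P = K * (4 ^+ d * (P * Q)) by ring.
    exact: H4.
  have HQ : Q = r `^ alpha * M `^ alpha by rewrite /Q /rho powRM ?ltW.
  rewrite -(@ler_pM2r _ c) //.
  have -> : B * r `^ alpha * c = K * 4 ^+ d * Q.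
    by rewrite HQ /B; field; rewrite gt_eqF.
  exact: H5.
have finS : finite_set S.
  apply: contrapT => inf.
  have [F [uF sF FS]] := @infinite_big _ _ inf (Num.Def.trunc (B * r `^ alpha)).+1.
  have := bound F uF FS; rewrite sF leNgt => /negP; apply.
  exact: truncnS_gt.
split => //.
apply: bound; first exact: fset_uniq.
move=> l; rewrite (in_fset_set finS); exact: set_mem.
Qed.
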